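(* Consider the Markov chain on the state space $\{0,1,2,\dots\}$ with infinite transition probability matrix $\mathbf P=(P_{ij})$ given by: $P_{00}=5/6$, $P_{01}=1/6$; $P_{10}=5/6$, $P_{12}=1/6$; for every $i\ge 2$: $P_{i0}=2/3$, $P_{i,i-1}=1/6$, $P_{i,i+1}=1/6$; all other entries $0$. Then the steady state probability vector $\vec\pi=(\pi_0,\pi_1,\pi_2,\dots)$ (the probability vector with $\vec\pi=\vec\pi\mathbf P$) is given by $\pi_i=\beta^i-\beta^{i+1}$ for $i=0,1,2,\dots$, where $\beta=3-2\sqrt2$. *)

(* Defs.v *)
From Stdlib Require Import Reals.
From Coquelicot Require Import Coquelicot.
Open Scope R_scope.

Definition P (i j : nat) : R :=
  match i with
  | O => match j with O => 5/6 | S O => 1/6 | _ => 0 end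
  | S O => match j with O => 5/6 | S (S O) => 1/6 | _ => 0 end
  | S (S k as i') =>
      if Nat.eqb j 0 then 2/3
      else if Nat.eqb j i' then 1/6
      else if Nat.eqb j (S i) then 1/6
      else 0
  end.

Definition prob_vector (pi : nat -> R) : Prop :=
  (forall i, 0 <= pi i) /\ is_series pi 1.

Definition stationary (pi : nat -> R) : Prop :=
  forall j, is_series (fun i => pi i * P i j) (pi j).

Definition beta : R := 3 - 2 * sqrt 2.

(* Main.v *)
Require Import Defs.
From Stdlib Require Import Reals.
From Coquelicot Require Import Coquelicot.
From Stdlib Require Import Lra Lia Psatz Arith.
Open Scope R_scope.

Lemma series_zero : is_series (fun _ : nat => 0) 0.
Proof.
  assert (H : Rabs (1/2) < 1) by (rewrite Rabs_pos_eq; lra).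
  pose proof (is_series_scal_r 0 _ _ (is_series_geom _ H)) as H2.
  rewrite Rmult_0_r in H2.
  eapply is_series_ext; [|exact H2]. intro n; simpl; ring.
Qed.

Lemma series_point (n : nat) (c : R) :
  is_series (fun i => if Nat.eqb i n then c else 0) c.
Proof.
  revert c; induction n as [|n IH]; intro c.
  - apply is_series_decr_1. simpl.
    match goal with |- is_series _ ?l => replace l with 0 by (unfold plus, opp; simpl; ring) end.
    eapply is_series_ext; [|exact series_zero]. intro k; reflexivity.
  - apply is_series_decr_1. simpl.
    match goal with |- is_series _ ?l => replace l with c by (unfold plus, opp; simpl; ring) end.
    apply IH.
Qed.

Lemma P_S (i m : nat) :
  P i (S m) = (if Nat.eqb i m then 1/6 else 0) + (if Nat.eqb i (S (S m)) then 1/6 else 0).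
Proof.
  destruct i as [|[|i]].
  - destruct m as [|[|m]]; simpl; lra.
  - destruct m as [|[|m]]; simpl; lra.
  - cbn [P].
    repeat match goal with |- context [Nat.eqb ?a ?b] => destruct (Nat.eqb_spec a b) end;
    try lia; lra.
Qed.

Lemma stat_S (pi : nat -> R) (m : nat) :
  is_series (fun i => pi i * P i (S m)) (pi m / 6 + pi (S (S m)) / 6).
Proof.
  eapply is_series_ext; [|exact (is_series_plus _ _ _ _
     (series_point m (pi m / 6)) (series_point (S (S m)) (pi (S (S m)) / 6)))].
  intro i. unfold plus; simpl. rewrite P_S.
  repeat match goal with |- context [Nat.eqb ?a ?b] => destruct (Nat.eqb_spec a b) end;
  try lia; subst; lra.
Qed.

Lemma stat_0 (pi : nat -> R) (l : R) : is_series pi l ->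
  is_series (fun i => pi i * P i 0) (2/3 * l + pi 0%nat / 6 + pi 1%nat / 6).
Proof.
  intro H.
  pose proof (is_series_scal_l (2/3) _ _ H) as H1.
  pose proof (is_series_plus _ _ _ _ H1 (series_point 0 (pi 0%nat / 6))) as H2.
  pose proof (is_series_plus _ _ _ _ H2 (series_point 1 (pi 1%nat / 6))) as H3.
  eapply is_series_ext; [|exact H3].
  intro i. unfold plus, scal; simpl. unfold mult; simpl.
  destruct i as [|[|i]]; simpl; lra.
Qed.

Lemma sqrt2_facts : sqrt 2 * sqrt 2 = 2 /\ 1 < sqrt 2 < 3/2.
Proof.
  pose proof (sqrt_sqrt 2 ltac:(lra)) as H.
  pose proof (sqrt_pos 2).
  split; [exact H|]. split; nra.
Qed.

Lemma beta_facts : beta * beta = 6 * beta - 1 /\ 0 < beta < 1.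
Proof.
  destruct sqrt2_facts as [H1 [H2 H3]]. unfold beta. split; [nra|lra].
Qed.

Theorem theorem4p1 :
  forall pi : nat -> R,
    (prob_vector pi /\ stationary pi) <->
    (forall i : nat, pi i = beta ^ i - beta ^ (S i)).
Proof.
  intro pi. destruct beta_facts as [Hb [Hb0 Hb1]]. split.
  - intros [[Hnn Hs] Hst].
    assert (Rec : forall m, pi (S m) = pi m / 6 + pi (S (S m)) / 6).
    { intro m. pose proof (is_series_unique _ _ (Hst (S m))) as E1.
      pose proof (is_series_unique _ _ (stat_S pi m)) as E2. congruence. }
    set (g := 6 - beta).
    assert (Hg : g * beta = 1) by (unfold g; nra).
    assert (Hg1 : 1 <= g) by (unfold g; lra).
    set (d := fun j => pi (S j) - beta * pi j).
    assert (Hd : forall j, d (S j) = g * d j).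
    { intro j. unfold d, g. pose proof (Rec j) as R1.
      replace (pi (S (S j))) with (6 * pi (S j) - pi j) by lra.
      replace ((6 - beta) * (pi (S j) - beta * pi j)) with
        (6 * pi (S j) - beta * pi (S j) - (6 * beta - beta * beta) * pi j) by ring.
      rewrite Hb. ring. }
    assert (Hmono : forall j, Rabs (d 0%nat) <= Rabs (d j)).
    { induction j as [|j IH]; [lra|]. rewrite Hd, Rabs_mult.
      rewrite (Rabs_pos_eq g) by lra.
      pose proof (Rabs_pos (d j)). nra. }
    assert (Hl : is_lim_seq pi 0) by (apply ex_series_lim_0; eexists; exact Hs).
    assert (Hdl : is_lim_seq d 0).
    { replace 0 with (0 - beta * 0) by ring.
      apply is_lim_seq_minus'.
      - apply (is_lim_seq_incr_1 pi 0). exact Hl.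
      - apply (is_lim_seq_scal_l pi beta 0) in Hl. simpl in Hl.
        exact Hl. }
    pose proof (is_lim_seq_le _ _ _ _ Hmono (is_lim_seq_const _)
                  (is_lim_seq_abs _ _ Hdl)) as Hle.
    simpl in Hle. rewrite Rabs_R0 in Hle.
    assert (Hd0 : d 0%nat = 0) by (pose proof (Rabs_pos (d 0%nat)); apply Rabs_eq_0; lra).
    assert (Hdz : forall j, d j = 0).
    { induction j as [|j IH]; [exact Hd0|]. rewrite Hd, IH; ring. }
    assert (Hpi : forall j, pi j = beta ^ j * pi 0%nat).
    { induction j as [|j IH]; [simpl; ring|].
      pose proof (Hdz j) as E; unfold d in E. simpl. rewrite Rmult_assoc, <- IH. lra. }
    assert (Hq : Rabs beta < 1) by (rewrite Rabs_pos_eq; lra).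
    pose proof (is_series_scal_r (pi 0%nat) _ _ (is_series_geom _ Hq)) as Hg2.
    assert (Hs' : is_series pi (/ (1 - beta) * pi 0%nat)).
    { eapply is_series_ext; [|exact Hg2]. intro n; cbv beta; rewrite (Hpi n); reflexivity. }
    pose proof (is_series_unique _ _ Hs) as U1.
    pose proof (is_series_unique _ _ Hs') as U2.
    assert (E0 : pi 0%nat = 1 - beta).
    { rewrite U1 in U2. replace (pi 0%nat) with ((1-beta) * (/ (1-beta) * pi 0%nat)) by (field; lra). rewrite <- U2; ring. }
    intro i. rewrite Hpi, E0. simpl. ring.
  - intro Hpi.
    assert (Hpi' : forall i, pi i = beta ^ i * (1 - beta)) by (intro i; rewrite Hpi; simpl; ring).
    assert (Hq : Rabs beta < 1) by (rewrite Rabs_pos_eq; lra).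
    assert (Hs : is_series pi 1).
    { pose proof (is_series_scal_r (1 - beta) _ _ (is_series_geom _ Hq)) as Hg2.
      replace 1 with (/ (1 - beta) * (1 - beta)) by (field; lra).
      eapply is_series_ext; [|exact Hg2]. intro n; cbv beta; rewrite (Hpi' n); reflexivity. }
    split; [split; [|exact Hs]|].
    + intro i. rewrite Hpi'. apply Rmult_le_pos; [apply pow_le|]; lra.
    + intro j. destruct j as [|m].
      * pose proof (stat_0 pi 1 Hs) as H.
        replace (pi 0%nat) with (2/3*1 + pi 0%nat / 6 + pi 1%nat / 6); [exact H|].
        rewrite !Hpi'. simpl. nra.
      * replace (pi (S m)) with (pi m / 6 + pi (S (S m)) / 6); [apply stat_S|].
        rewrite !Hpi'. simpl. 
        replace (beta * (beta * beta ^ m) * (1 - beta)) with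
          ((beta * beta) * (beta ^ m * (1 - beta))) by ring.
        rewrite Hb. field.
Qed.
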